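(* Let $b\in(0,+\infty]$, $\beta>0$, $\alpha\ge0$, and $L'>L\ge0$ with $L+\alpha>0$. If $u,g\in\mathbb R$ satisfy $u\in H^{FP}_{\alpha,\beta,L,b}(g)$, then $u\in H^{FP}_{\alpha,\beta,L',b}(g)$.
   Context: For $L\ge0$ with $L+\alpha>0$, put $s:=\beta/(L+\alpha)$; the set $H^{FP}_{\alpha,\beta,L,b}(g)$ for $g\in\mathbb R$ is defined as follows. If $\sqrt{2s}\le b$: $u\in H^{FP}_{\alpha,\beta,L,b}(g)$ iff one of (a) $u=-b$ and $g\ge\alpha b$; (b) $u=b$ and $g\le-\alpha b$; (c) $u=0$ and $|g|\le(L+\alpha)\sqrt{2s}$; (d) $\alpha>0$, $\alpha u=-g$ and $|g|\in\alpha[\sqrt{2s},b]$; (e) $\alpha=0$, $g=0$ and $|u|\in[\sqrt{2s},b]$ holds (with (a),(b) void if $b=+\infty$). If $\sqrt{2s}>b$: $u\in H^{FP}_{\alpha,\beta,L,b}(g)$ iff one of (a) $u=-b$ and $g\ge(L+\alpha)(b/2+s/b)-Lb$; (b) $u=b$ and $g\le-\big((L+\alpha)(b/2+s/b)-Lb\big)$; (c) $u=0$ and $|g|\le(L+\alpha)(b/2+s/b)$; (d) $\alpha>0$, $\alpha u=-g$ and $|g|\in\alpha[\sqrt{2s},b]$; (e) $\alpha=0$, $g=0$ and $|u|\in[\sqrt{2s},b]$ holds. *)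

(* Defs.v *)
From Stdlib Require Import Reals.
Open Scope R_scope.

(* The extended threshold b ∈ (0,+∞] is encoded as [option R]:
   [Some bb] is the finite value bb, [None] is +∞. *)

Definition HFP (alpha beta L : R) (b : option R) (g u : R) : Prop :=
  let s := beta / (L + alpha) in
  match b with
  | None =>
      (* sqrt(2s) <= +∞ always; cases (a),(b) are void *)
         (u = 0 /\ Rabs g <= (L + alpha) * sqrt (2 * s))
      \/ (alpha > 0 /\ alpha * u = - g /\ alpha * sqrt (2 * s) <= Rabs g)
      \/ (alpha = 0 /\ g = 0 /\ sqrt (2 * s) <= Rabs u)
  | Some bb =>
      (sqrt (2 * s) <= bb /\
         (  (u = - bb /\ g >= alpha * bb)
         \/ (u = bb /\ g <= - (alpha * bb))
         \/ (u = 0 /\ Rabs g <= (L + alpha) * sqrt (2 * s))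
         \/ (alpha > 0 /\ alpha * u = - g /\
               alpha * sqrt (2 * s) <= Rabs g <= alpha * bb)
         \/ (alpha = 0 /\ g = 0 /\ sqrt (2 * s) <= Rabs u <= bb)))
   \/ (bb < sqrt (2 * s) /\
         (  (u = - bb /\ g >= (L + alpha) * (bb / 2 + s / bb) - L * bb)
         \/ (u = bb /\ g <= - ((L + alpha) * (bb / 2 + s / bb) - L * bb))
         \/ (u = 0 /\ Rabs g <= (L + alpha) * (bb / 2 + s / bb))
         \/ (alpha > 0 /\ alpha * u = - g /\
               alpha * sqrt (2 * s) <= Rabs g <= alpha * bb)
         \/ (alpha = 0 /\ g = 0 /\ sqrt (2 * s) <= Rabs u <= bb)))
  end.

(* Main.v *)
Require Import Defs.
From Stdlib Require Import Reals Lra Psatz.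
Open Scope R_scope.

Lemma sq_fact (A beta : R) : 0 < A -> 0 < beta ->
  A * (sqrt (2 * (beta / A)) * sqrt (2 * (beta / A))) = 2 * beta.
Proof.
  intros HA Hb. rewrite sqrt_sqrt.
  - field. lra.
  - apply Rmult_le_pos; [lra|]. apply Rlt_le, Rdiv_lt_0_compat; lra.
Qed.

Theorem mainTheorem13 (b : option R) (alpha beta L L' u g : R) :
  (forall bb, b = Some bb -> 0 < bb) ->
  0 < beta -> 0 <= alpha -> 0 <= L -> L < L' -> 0 < L + alpha ->
  HFP alpha beta L b g u ->
  HFP alpha beta L' b g u.
Proof.
  intros Hbb Hb Ha HL HLL HA H.
  unfold HFP in *. cbv zeta in *.
  assert (HM : 0 < L' + alpha) by lra.
  pose proof (sq_fact _ _ HA Hb) as Sr.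
  pose proof (sq_fact _ _ HM Hb) as Sr'.
  set (r := sqrt (2 * (beta / (L + alpha)))) in *.
  set (r' := sqrt (2 * (beta / (L' + alpha)))) in *.
  assert (r0 : 0 <= r) by apply sqrt_pos.
  assert (r0' : 0 <= r') by apply sqrt_pos.
  assert (rr : r' < r).
  { destruct (Rlt_or_le r' r) as [h|h]; auto. exfalso.
    assert (r * r <= r' * r') by (apply Rmult_le_compat; lra).
    assert (0 < r * r) by nra.
    nra. }
  assert (Ar : (L + alpha) * r <= (L' + alpha) * r').
  { destruct (Rle_or_lt ((L + alpha) * r) ((L' + alpha) * r')) as [h|h]; auto.
    exfalso.
    assert (((L' + alpha) * r') * ((L' + alpha) * r') < ((L + alpha) * r) * ((L + alpha) * r)).
    { apply Rmult_le_0_lt_compat; nra. }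
    nra. }
  assert (ar : alpha * r' <= alpha * r) by nra.
  destruct b as [bb|].
  2:{ destruct H as [H|[H|H]].
      - left; lra.
      - right; left; lra.
      - right; right; lra. }
  assert (B0 : 0 < bb) by (apply Hbb; reflexivity).
  assert (E1 : (L + alpha) * (bb / 2 + beta / (L + alpha) / bb)
               = (L + alpha) * bb / 2 + beta / bb) by (field; lra).
  assert (E2 : (L' + alpha) * (bb / 2 + beta / (L' + alpha) / bb)
               = (L' + alpha) * bb / 2 + beta / bb) by (field; lra).
  rewrite E1 in H. rewrite E2.
  assert (Q : beta / bb * bb = beta) by (field; lra).
  set (q := beta / bb) in *.
  destruct H as [[H1 H]|[H1 H]].
  - left. split; [lra|].
    destruct H as [H|[H|[H|[H|H]]]].
    + left; lra.
    + right; left; lra.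
    + right; right; left; lra.
    + right; right; right; left; lra.
    + right; right; right; right; lra.
  - assert (Hq : (L + alpha) * bb / 2 < q).
    { assert (bb * bb < r * r) by nra. nra. }
    destruct (Rle_or_lt r' bb) as [h|h].
    + left. split; [lra|].
      destruct H as [H|[H|[H|[H|H]]]].
      * left; lra.
      * right; left; lra.
      * right; right; left. split; [lra|].
        assert (K1 : (L' + alpha) * r' * r' <= (L' + alpha) * r' * bb)
          by (apply Rmult_le_compat_l; nra).
        assert (K2 : bb * bb < r * r) by nra.
        assert (K3 : (L + alpha) * (bb * bb) < (L + alpha) * (r * r))
          by (apply Rmult_lt_compat_l; lra).
        assert (K4 : ((L + alpha) * bb / 2 + q) * bb <= (L' + alpha) * r' * bb) by nra.
        assert (K5 : (L + alpha) * bb / 2 + q <= (L' + alpha) * r')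
          by (apply Rmult_le_reg_r with bb; lra).
        lra.
      * right; right; right; left; lra.
      * right; right; right; right; lra.
    + right. split; [lra|].
      assert (LB : L * bb < L' * bb) by (apply Rmult_lt_compat_r; lra).
      destruct H as [H|[H|[H|[H|H]]]].
      * left; lra.
      * right; left; lra.
      * right; right; left; lra.
      * right; right; right; left; lra.
      * right; right; right; right; lra.
Qed.
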